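(* Let $u(x,y)$, $v(x,y)$ be two conjugate harmonic functions on an open set $\Omega\subset\mathbb{R}^2$, i.e. $u_x=v_y$ and $u_y=-v_x$ on $\Omega$. Let $\psi(x,y)$ be a (sufficiently smooth) real function on $\Omega$ satisfying $$(v\,\psi_x)_x+(v\,\psi_y)_y=0 .$$ Define $$f_2=-\psi_y,\quad g_2=\psi_x,\quad f_1=-\psi_y u-\psi_x v,\quad g_1=\psi_x u-\psi_y v,\quad \Lambda=\psi_x^2+\psi_y^2 .$$ Then the geodesic flow of the metric $ds^2=\Lambda(x,y)(dx^2+dy^2)$ admits the rational first integral $$F=\frac{f_1(x,y)p_1+g_1(x,y)p_2}{f_2(x,y)p_1+g_2(x,y)p_2}.$$
   Context: For a metric $ds^2=\Lambda(x,y)(dx^2+dy^2)$ in coordinates $(x,y)$ with momenta $(p_1,p_2)$, the geodesic flow is the Hamiltonian system with Hamiltonian $H=\frac{p_1^2+p_2^2}{2\Lambda}$ and canonical Poisson bracket $\{F,H\}=\sum_{i=1}^2\left(\frac{\partial F}{\partial x^i}\frac{\partial H}{\partial p_i}-\frac{\partial F}{\partial p_i}\frac{\partial H}{\partial x^i}\right)$ with $x^1=x$, $x^2=y$. A function $F(x,y,p_1,p_2)$ is a first integral if $\{F,H\}\equiv 0$ (wherever $F$ and $H$ are defined). *)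

(* Defs.v *)
From Stdlib Require Import Reals.
From Coquelicot Require Import Coquelicot.
Open Scope R_scope.

Definition pdx (f : R -> R -> R) (x y : R) : R := Derive (fun t => f t y) x.
Definition pdy (f : R -> R -> R) (x y : R) : R := Derive (fun t => f x t) y.

Definition cont2 (f : R -> R -> R) (x y : R) : Prop :=
  continuous (fun z : R * R => f (fst z) (snd z)) (x, y).

Definition C1_on (Omega : R * R -> Prop) (f : R -> R -> R) : Prop :=
  forall x y, Omega (x, y) ->
    cont2 f x y /\
    ex_derive (fun t => f t y) x /\ ex_derive (fun t => f x t) y /\
    cont2 (pdx f) x y /\ cont2 (pdy f) x y.

Definition C2_on (Omega : R * R -> Prop) (f : R -> R -> R) : Prop :=
  C1_on Omega f /\ C1_on Omega (pdx f) /\ C1_on Omega (pdy f).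

Definition d_x  (F : R -> R -> R -> R -> R) x y p1 p2 := Derive (fun t => F t y p1 p2) x.
Definition d_y  (F : R -> R -> R -> R -> R) x y p1 p2 := Derive (fun t => F x t p1 p2) y.
Definition d_p1 (F : R -> R -> R -> R -> R) x y p1 p2 := Derive (fun t => F x y t p2) p1.
Definition d_p2 (F : R -> R -> R -> R -> R) x y p1 p2 := Derive (fun t => F x y p1 t) p2.

Definition poisson_bracket (F H : R -> R -> R -> R -> R) x y p1 p2 : R :=
  d_x F x y p1 p2 * d_p1 H x y p1 p2 + d_y F x y p1 p2 * d_p2 H x y p1 p2
  - d_p1 F x y p1 p2 * d_x H x y p1 p2 - d_p2 F x y p1 p2 * d_y H x y p1 p2.

(* Hamiltonian of the geodesic flow of ds^2 = Lambda (dx^2 + dy^2). *)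
Definition geodesic_H (Lam : R -> R -> R) : R -> R -> R -> R -> R :=
  fun x y p1 p2 => (p1 ^ 2 + p2 ^ 2) / (2 * Lam x y).

(* Main.v *)
Require Import Defs.
From Stdlib Require Import Reals Lra.
From Coquelicot Require Import Coquelicot.
Open Scope R_scope.

Ltac etaD := repeat match goal with |- context [Derive (fun z => ?f z) ?x] => change (Derive (fun z => f z) x) with (Derive f x) end.

Lemma dF (A B U V : R -> R) x p1 p2 :
  ex_derive A x -> ex_derive B x -> ex_derive U x -> ex_derive V x ->
  - B x * p1 + A x * p2 <> 0 ->
  Derive (fun t => ((- B t * U t - A t * V t) * p1 + (A t * U t - B t * V t) * p2)
                    / (- B t * p1 + A t * p2)) x
  = ((- Derive B x * U x - B x * Derive U x - Derive A x * V x - A x * Derive V x) * p1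
     + (Derive A x * U x + A x * Derive U x - Derive B x * V x - B x * Derive V x) * p2)
    / (- B x * p1 + A x * p2)
    - ((- B x * U x - A x * V x) * p1 + (A x * U x - B x * V x) * p2)
      * (- Derive B x * p1 + Derive A x * p2) / (- B x * p1 + A x * p2) ^ 2.
Proof.
  intros HA HB HU HV HD.
  apply is_derive_unique.
  auto_derive.
  - repeat split; assumption.
  - etaD; field. assumption.
Qed.

Lemma dH (A B : R -> R) x p1 p2 :
  ex_derive A x -> ex_derive B x -> A x ^ 2 + B x ^ 2 <> 0 ->
  Derive (fun t => (p1 ^ 2 + p2 ^ 2) / (2 * (A t ^ 2 + B t ^ 2))) x
  = - (p1 ^ 2 + p2 ^ 2) * (A x * Derive A x + B x * Derive B x) / (A x ^ 2 + B x ^ 2) ^ 2.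
Proof.
  intros HA HB HL.
  apply is_derive_unique.
  auto_derive.
  - repeat split; try assumption. intro H; apply HL; lra.
  - etaD; field. assumption.
Qed.

Lemma dlin (a b c d : R) t :
  c * t + d <> 0 ->
  Derive (fun s => (a * s + b) / (c * s + d)) t = (a * d - b * c) / (c * t + d) ^ 2.
Proof.
  intros H. apply is_derive_unique. auto_derive. auto. field. auto.
Qed.
Lemma dlin2 (a b c d : R) t :
  d * t + c <> 0 ->
  Derive (fun s => (a + b * s) / (c + d * s)) t = (b * c - a * d) / (c + d * t) ^ 2.
Proof.
  intros H. apply is_derive_unique. auto_derive. lra. field. lra.
Qed.
Lemma dq1 (L p2 : R) t : L <> 0 ->
  Derive (fun s => (s ^ 2 + p2 ^ 2) / (2 * L)) t = t / L.
Proof. intros H. apply is_derive_unique. auto_derive. auto. field. auto. Qed.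
Lemma dq2 (L p1 : R) t : L <> 0 ->
  Derive (fun s => (p1 ^ 2 + s ^ 2) / (2 * L)) t = t / L.
Proof. intros H. apply is_derive_unique. auto_derive. auto. field. auto. Qed.
Lemma schwarz_psi (Omega : R * R -> Prop) psi x y :
  open Omega -> C2_on Omega psi -> Omega (x, y) ->
  pdx (pdy psi) x y = pdy (pdx psi) x y.
Proof.
  intros Ho [H0 [H1 H2]] HO.
  unfold pdx, pdy.
  apply Schwarz.
  - apply locally_2d_locally.
    apply (filter_imp (fun z => Omega z)); [|now apply Ho].
    intros [u v] Huv; simpl.
    destruct (H0 u v Huv) as [_ [A [B _]]].
    destruct (H1 u v Huv) as [_ [_ [C _]]].
    destruct (H2 u v Huv) as [_ [D _]].
    repeat split; assumption.
  - apply continuity_2d_pt_filterlim.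
    destruct (H2 x y HO) as [_ [_ [_ [C _]]]]. exact C.
  - apply continuity_2d_pt_filterlim.
    destruct (H1 x y HO) as [_ [_ [_ [_ C]]]]. exact C.
Qed.
Theorem theorem1 (Omega : R * R -> Prop) (u v psi : R -> R -> R) :
  open Omega ->
  C1_on Omega u -> C1_on Omega v -> C2_on Omega psi ->
  (forall x y, Omega (x, y) ->
     pdx u x y = pdy v x y /\ pdy u x y = - pdx v x y) ->
  (forall x y, Omega (x, y) ->
     pdx (fun a b => v a b * pdx psi a b) x y
     + pdy (fun a b => v a b * pdy psi a b) x y = 0) ->
  let f2 := fun x y => - pdy psi x y in
  let g2 := fun x y => pdx psi x y in
  let f1 := fun x y => - pdy psi x y * u x y - pdx psi x y * v x y in
  let g1 := fun x y => pdx psi x y * u x y - pdy psi x y * v x y in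
  let Lam := fun x y => pdx psi x y ^ 2 + pdy psi x y ^ 2 in
  let F := fun x y p1 p2 =>
             (f1 x y * p1 + g1 x y * p2) / (f2 x y * p1 + g2 x y * p2) in
  forall x y p1 p2, Omega (x, y) ->
    Lam x y <> 0 ->
    f2 x y * p1 + g2 x y * p2 <> 0 ->
    poisson_bracket F (geodesic_H Lam) x y p1 p2 = 0.
Proof.
  intros Ho Hu Hv Hpsi Hcr Hdiv f2 g2 f1 g1 Lam F x y p1 p2 HO HL HD.
  assert (Hs := schwarz_psi Omega psi x y Ho Hpsi HO).
  destruct (Hcr x y HO) as [Hc1 Hc2].
  assert (Hd := Hdiv x y HO).
  destruct Hpsi as [Hp0 [Hp1 Hp2]].
  destruct (Hu x y HO) as [_ [Hux [Huy _]]].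
  destruct (Hv x y HO) as [_ [Hvx [Hvy _]]].
  destruct (Hp1 x y HO) as [_ [Haxx [Haxy _]]].
  destruct (Hp2 x y HO) as [_ [Hbyx [Hbyy _]]].
  unfold poisson_bracket, d_x, d_y, d_p1, d_p2, geodesic_H.
  subst F Lam f1 g1 f2 g2. cbv beta.
  cbv beta in HL, HD.
  rewrite (dF (fun t => pdx psi t y) (fun t => pdy psi t y) (fun t => u t y) (fun t => v t y) x p1 p2 Haxx Hbyx Hux Hvx HD).
  rewrite (dF (fun t => pdx psi x t) (fun t => pdy psi x t) (fun t => u x t) (fun t => v x t) y p1 p2 Haxy Hbyy Huy Hvy HD).
  rewrite (dH (fun t => pdx psi t y) (fun t => pdy psi t y) x p1 p2 Haxx Hbyx HL).
  rewrite (dH (fun t => pdx psi x t) (fun t => pdy psi x t) y p1 p2 Haxy Hbyy HL).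
  rewrite (dq1 _ p2 p1) by (intro; apply HL; lra).
  rewrite (dq2 _ p1 p2) by (intro; apply HL; lra).
  rewrite dlin by exact HD.
  rewrite dlin2 by lra.
  cbv beta.
  assert (Hs' : Derive (fun t => pdy psi t y) x = Derive (fun t => pdx psi x t) y) by exact Hs.
  assert (Hc1' : Derive (fun t => u t y) x = Derive (fun t => v x t) y) by exact Hc1.
  assert (Hc2' : Derive (fun t => u x t) y = - Derive (fun t => v t y) x) by exact Hc2.
  assert (Hd' : Derive (fun t => v t y * pdx psi t y) x + Derive (fun t => v x t * pdy psi x t) y = 0) by exact Hd.
  rewrite Derive_mult in Hd' by assumption.
  rewrite Derive_mult in Hd' by assumption.
  rewrite Hs', Hc1', Hc2'.
  set (a := pdx psi x y) in *. set (b := pdy psi x y) in *.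
  set (uu := u x y) in *. set (vv := v x y) in *.
  set (axx := Derive (fun t => pdx psi t y) x) in *.
  set (axy := Derive (fun t => pdx psi x t) y) in *.
  set (byy := Derive (fun t => pdy psi x t) y) in *.
  set (vx := Derive (fun t => v t y) x) in *.
  set (vy := Derive (fun t => v x t) y) in *.
  transitivity (-(p1^2+p2^2)/((a^2+b^2)*(-b*p1+a*p2)) * (vx*a+vv*axx+(vy*b+vv*byy))).
  - field. split; assumption.
  - replace (vx*a+vv*axx+(vy*b+vv*byy)) with 0 by (rewrite <- Hd'; ring). ring.
Qed.
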